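(* Let $A$ (held by Alice) and $B$ (held by Bob) be strings over an alphabet $\Sigma$ known to both parties, and let $\epsilon>0$ be any constant. The \textsc{Lcp} problem, computing $\ell=\mathrm{LCP}(A,B)$, has a public-coin randomized protocol with either (1) $O(1)$ rounds and $O(|A|^\epsilon)$ communication, or (2) $O(\lg\lg\ell)$ rounds and $O(\ell^\epsilon)$ communication.
   Context: $\mathrm{LCP}(A,B)$ is the largest $\ell\ge0$ with $A[1..\ell]=B[1..\ell]$. In the public-coin randomized model the parties share an infinite string of independent unbiased random bits, and the output must be correct with probability at least a fixed constant greater than $1/2$. A round is one message; communication is the total number of bits sent. *)

(* Defs.v *)
From mathcomp Require Import all_boot.
From Stdlib Require Import Reals.

Set Implicit Arguments.
Unset Strict Implicit.
Unset Printing Implicit Defensive.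

(* Longest common prefix, as in the paper: the largest l >= 0 such that
   A[1..l] = B[1..l].  (Any such l is <= min(|A|,|B|).)                     *)
Definition lcp (Sigma : eqType) (A B : seq Sigma) : nat :=
  \max_(i < (minn (size A) (size B)).+1 | take i A == take i B) (i : nat).

(* Two-party public-coin protocols, in the standard protocol-tree model:
   the transcript is the sequence of bits sent so far; at each node the
   (public) randomness and the transcript determine whether the protocol
   has halted or who sends the next bit; the sender's bit depends on its
   own input, the public randomness and the transcript.  The output is
   determined by the public randomness and the final transcript (so both
   parties know it).  The public random string is r : nat -> bool.        *)
Record protocol (Sigma : Type) := Protocol {
  owner : (nat -> bool) -> seq bool -> option bool;
    (* None = halt, Some false = Alice speaks, Some true = Bob speaks *)
  bitA  : seq Sigma -> (nat -> bool) -> seq bool -> bool;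
  bitB  : seq Sigma -> (nat -> bool) -> seq bool -> bool;
  out   : (nat -> bool) -> seq bool -> nat
}.

Section Execution.
Variables (Sigma : Type) (P : protocol Sigma) (A B : seq Sigma) (r : nat -> bool).

Definition step (t : seq bool) : seq bool :=
  match owner P r t with
  | None => t
  | Some false => rcons t (bitA P A r t)
  | Some true => rcons t (bitB P B r t)
  end.

Definition trans (n : nat) : seq bool := iter n step [::].

(* the protocol halts after exactly n bits have been exchanged
   (so the communication is n) *)
Definition halts_at (n : nat) : Prop :=
  owner P r (trans n) = None /\ forall k, k < n -> owner P r (trans k) <> None.

Definition speakers (n : nat) : seq bool :=
  [seq odflt false (owner P r (trans k)) | k <- iota 0 n].

(* number of maximal blocks of consecutive bits sent by the same party,
   i.e. the number of messages (rounds) *)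
Definition nblocks (s : seq bool) : nat :=
  if s is x :: s' then (count (fun b : bool => b) (pairmap (fun a b => a != b) x s')).+1 else 0.

Definition rounds (n : nat) : nat := nblocks (speakers n).

Definition output (n : nat) : nat := out P r (trans n).

End Execution.

(* An event E that
   depends only on the first N bits has probability equal to the fraction
   of w in {0,1}^N for which it holds (extended by zeros).                 *)
Definition ext (N : nat) (w : {ffun 'I_N -> bool}) : nat -> bool :=
  fun i => if (insub i : option 'I_N) is Some j then w j else false.

Definition cylinder (N : nat) (E : (nat -> bool) -> Prop) : Prop :=
  forall r r', (forall i, i < N -> r i = r' i) -> (E r <-> E r').

Definition prob_ge_2_3 (E : (nat -> bool) -> Prop) : Prop :=
  exists N, cylinder N E /\
    exists S : seq {ffun 'I_N -> bool},
      [/\ uniq S, (forall w, w \in S -> E (ext w)) & (2 * 2 ^ N <= 3 * size S)%N].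

Definition pow_bound (c eps : R) (m x : nat) : Prop :=
  Rle (INR x) (Rmult c (Rpower (Rplus (INR m) 1) eps)).

Definition lglg_bound (c : R) (l x : nat) : Prop :=
  Rle (INR x) (Rmult c (Rplus 1 (ln (Rplus 1 (ln (Rplus 1 (INR l))))))).

(* Main.v *)
Require Import Defs.
From mathcomp Require Import all_boot.
From Stdlib Require Import Reals.
From mathcomp Require Import zify.
From Stdlib Require Import Lia Lra Psatz.
Local Notation "m ^ n" := (expn m n) : nat_scope.
Set Implicit Arguments.
Unset Strict Implicit.
Unset Printing Implicit Defensive.


Lemma map_constE (T U : Type) (b : U) (s : seq T) : [seq b | _ <- s] = nseq (size s) b.
Proof. by elim: s => //= x l ->. Qed.

Section Generic.
Variable Sigma : Type.
Variable St : Type.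
Variable init : St.
Variable nxt : St -> option (bool * nat).
Variable upd : St -> seq bool -> St.
Variable cA : seq Sigma -> (nat -> bool) -> St -> nat -> bool.
Variable cB : seq Sigma -> (nat -> bool) -> St -> nat -> bool.
Variable fin : St -> nat.

Definition pstep (p : St * seq bool) (b : bool) : St * seq bool :=
  match nxt p.1 with
  | Some (_, n) => if size (rcons p.2 b) == n.+1 then (upd p.1 (rcons p.2 b), [::])
                   else (p.1, rcons p.2 b)
  | None => (p.1, rcons p.2 b)
  end.
Definition parse (t : seq bool) := foldl pstep (init, [::]) t.
Definition gowner (r : nat -> bool) (t : seq bool) : option bool :=
  match nxt (parse t).1 with Some (b, _) => Some b | None => None end.
Definition mkP : protocol Sigma := @Protocol Sigma
  gowner
  (fun A r t => cA A r (parse t).1 (size (parse t).2))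
  (fun B r t => cB B r (parse t).1 (size (parse t).2))
  (fun r t => fin (parse t).1).

Section Run.
Variables (A B : seq Sigma) (r : nat -> bool).
Definition cont (b : bool) s := if b then cB B r s else cA A r s.
Inductive runs : St -> nat -> seq bool -> St -> Prop :=
| RHalt s : nxt s = None -> runs s 0 [::] s
| RStep s b n bits sp f : nxt s = Some (b, n) ->
    runs (upd s (mkseq (cont b s) n.+1)) bits sp f ->
    runs s (n.+1 + bits) (nseq n.+1 b ++ sp) f.

Lemma RStep' s b n s' bits sp f : nxt s = Some (b, n) ->
  upd s (mkseq (cont b s) n.+1) = s' -> runs s' bits sp f ->
  runs s (n.+1 + bits) (nseq n.+1 b ++ sp) f.
Proof. by move=> H1 H2 H3; apply: RStep H1 _; rewrite H2. Qed.

Notation tr := (trans mkP A B r).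

Lemma msg_lemma m s b n : parse (tr m) = (s, [::]) -> nxt s = Some (b, n) ->
  forall k, k <= n.+1 ->
  [/\ tr (m + k) = tr m ++ take k (mkseq (cont b s) n.+1),
      parse (tr (m + k)) = if k == n.+1 then (upd s (mkseq (cont b s) n.+1), [::])
                           else (s, take k (mkseq (cont b s) n.+1)) &
      k <= n -> gowner r (tr (m + k)) = Some b].
Proof.
move=> Hp Hn; set c := mkseq _ _.
have Hc : size c = n.+1 by rewrite size_mkseq.
elim=> [|k IH] Hk.
  rewrite addn0 take0 cats0 /= Hp; split=> //.
  by rewrite /gowner Hp /= Hn.
have [E1 E2 _] := IH (ltnW Hk).
have Hkn : (k == n.+1) = false by apply/negbTE; rewrite neq_ltn Hk.
rewrite Hkn in E2.
have Hstep : tr (m + k.+1) = step mkP A B r (tr (m + k)) by rewrite addnS.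
have Hsz : size (take k c) = k by rewrite size_takel // Hc ltnW.
have Hsz1 : size (take k.+1 c) = k.+1 by rewrite size_takel // Hc.
have Hbit : step mkP A B r (tr (m + k)) = rcons (tr (m + k)) (nth false c k).
  rewrite /step /= /gowner E2 /= Hn Hsz /c nth_mkseq // /cont.
  by destruct b.
have Htk : take k.+1 c = rcons (take k c) (nth false c k) by rewrite (take_nth false) // Hc.
split.
- by rewrite Hstep Hbit E1 Htk rcons_cat.
- rewrite Hstep Hbit /parse foldl_rcons -/(parse _) E2 /pstep /= Hn -Htk Hsz1.
  case: eqP => [Hkk|//]; by rewrite Hkk -Hc take_size.
- move=> Hkn'; rewrite Hstep Hbit /gowner /parse foldl_rcons -/(parse _) E2 /pstep /= Hn -Htk Hsz1.
  have -> : (k.+1 == n.+1) = false by apply/negbTE; rewrite neq_ltn ltnS Hkn'.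
  by rewrite /= Hn.
Qed.

Lemma runs_spec s bits sp f : runs s bits sp f -> forall m, parse (tr m) = (s, [::]) ->
  [/\ gowner r (tr (m + bits)) = None,
      (forall k, m <= k < m + bits -> gowner r (tr k) <> None),
      [seq odflt false (gowner r (tr k)) | k <- iota m bits] = sp &
      fin (parse (tr (m + bits))).1 = fin f].
Proof.
elim=> {s bits sp f} [s Hn|s b n bits sp f Hn Hr IH] m Hp.
  rewrite addn0 /gowner Hp /= Hn; split=> //; first by move=> k; lia.
have [E1 E2 E3] := msg_lemma Hp Hn (leqnn n.+1).
rewrite eqxx in E2.
have [F1 F2 F3 F4] := IH _ E2.
rewrite addnA; split=> //.
- move=> k /andP[H1 H2]; case: (ltnP k (m + n.+1)) => Hk.
    have Hkm : k - m <= n.+1 by lia.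
    have [_ _ G3] := msg_lemma Hp Hn Hkm.
    rewrite subnKC // in G3; rewrite G3 //; lia.
  by apply: F2; rewrite Hk.
- rewrite iotaD map_cat F3; congr (_ ++ _).
  have -> : [seq odflt false (gowner r (tr k)) | k <- iota m n.+1] = [seq b | k <- iota m n.+1].
    apply/eq_in_map => k; rewrite mem_iota => /andP[H1 H2].
    have Hkm : k - m <= n.+1 by lia.
    have [_ _ G3] := msg_lemma Hp Hn Hkm.
    rewrite subnKC // in G3; rewrite G3 //; lia.
  by rewrite map_constE size_iota.
Qed.
Lemma runs_main bits sp f : runs init bits sp f ->
  [/\ halts_at mkP A B r bits, rounds mkP A B r bits = nblocks sp &
      output mkP A B r bits = fin f].
Proof.
move=> H; have [F1 F2 F3 F4] := runs_spec H (m := 0) erefl.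
rewrite add0n in F1 F2 F4.
split.
- split=> // k Hk; apply: F2; lia.
- by rewrite /rounds /speakers -F3.
- exact: F4.
Qed.
End Run.

Lemma trans_ext A B r r' : (forall s o, cA A r s o = cA A r' s o) ->
  (forall s o, cB B r s o = cB B r' s o) ->
  forall n, trans mkP A B r n = trans mkP A B r' n.
Proof.
move=> HA HB; elim=> //= n IH.
by rewrite IH /step /= /gowner HA HB.
Qed.

Lemma ext_props A B r r' : (forall s o, cA A r s o = cA A r' s o) ->
  (forall s o, cB B r s o = cB B r' s o) -> forall n,
  [/\ halts_at mkP A B r n <-> halts_at mkP A B r' n,
      rounds mkP A B r n = rounds mkP A B r' n &
      output mkP A B r n = output mkP A B r' n].
Proof.
move=> HA HB n; have E := trans_ext HA HB.
split.
- rewrite /halts_at /=; split=> -[H1 H2]; split.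
  + by move: H1; rewrite /gowner E.
  + by move=> k /H2; rewrite /gowner E.
  + by move: H1; rewrite /gowner E.
  + by move=> k /H2; rewrite /gowner E.
- by rewrite /rounds /speakers /=; congr nblocks; apply: eq_map => k; rewrite E.
- by rewrite /output /= E.
Qed.
End Generic.

Lemma halts_unique (Sigma : Type) (P : protocol Sigma) A B r n n' :
  halts_at P A B r n -> halts_at P A B r n' -> n = n'.
Proof.
move=> [H1 H2] [H1' H2']; case: (ltngtP n n') => // H.
- by have := H2' _ H.
- by have := H2 _ H.
Qed.

Lemma nblocks_cons2 x y s : nblocks (x :: y :: s) = (x != y) + nblocks (y :: s).
Proof. by rewrite /nblocks /= addnS. Qed.

Lemma nblocks_cat s1 s2 : nblocks (s1 ++ s2) <= nblocks s1 + nblocks s2.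
Proof.
case: s1 => [//|x s1].
elim: s1 x => [|y s1 IH] x.
  change (nblocks (x :: s2) <= 1 + nblocks s2).
  case: s2 => [//|y s2]; rewrite nblocks_cons2.
  by rewrite leq_add2r leq_b1.
change (nblocks (x :: y :: (s1 ++ s2)) <= nblocks (x :: y :: s1) + nblocks s2).
rewrite !nblocks_cons2 -addnA leq_add2l.
exact: IH.
Qed.

Lemma nblocks_nseq n b : nblocks (nseq n b) <= 1.
Proof.
case: n => [//|n]; elim: n => [//|n IH].
by rewrite -[nseq _ _]/(b :: b :: nseq n b) nblocks_cons2 eqxx add0n.
Qed.

Lemma nblocks_flatten ss : nblocks (flatten ss) <= sumn (map nblocks ss).
Proof.
elim: ss => [//|s ss IH] /=.
by apply: leq_trans (nblocks_cat _ _) _; rewrite leq_add2l.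
Qed.


Section LCP.
Variable Sigma : eqType.
Implicit Types A B : seq Sigma.

Lemma lcp_le A B : lcp A B <= minn (size A) (size B).
Proof. by apply/bigmax_leqP => i _; rewrite -ltnS. Qed.

Lemma lcp_takeP A B : take (lcp A B) A == take (lcp A B) B.
Proof.
rewrite /lcp.
have H0 : (fun i : 'I_(minn (size A) (size B)).+1 => take i A == take i B) ord0 by rewrite /= !take0.
rewrite (bigmax_eq_arg _ H0).
by case: arg_maxnP.
Qed.

Lemma lcp_take A B c : c <= minn (size A) (size B) ->
  (c <= lcp A B) = (take c A == take c B).
Proof.
move=> Hc; apply/idP/idP.
- move=> Hl; have /eqP H := lcp_takeP A B.
  by rewrite -(take_takel A Hl) -(take_takel B Hl) H.
- move=> Ht; have Hc' : c < (minn (size A) (size B)).+1 by [].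
  exact: (leq_bigmax_cond (F := fun i : 'I__ => nat_of_ord i) (Ordinal Hc') Ht).
Qed.
End LCP.


Section Proto.
Variable Sigma : finType.
Variable R0 : nat.
Definition Rn := R0.+2.

Definition cc i := 3 ^ (3 ^ i).
Definition tt c := 2 * trunc_log 2 c + 5.
Definition SS := #|Sigma|.
Definition idx c j q s := j + tt c * (s + SS * q).
Fixpoint hsum (r : nat -> bool) c j q (x : seq Sigma) : bool :=
  if x is a :: x' then r (idx c j q (enum_rank a)) (+) hsum r c j q.+1 x' else false.
Definition hb r c j x := (j < tt c) && hsum r c j 0 x.

Lemma exK L : exists k, (2 <= k) && (L <= k ^ Rn).
Proof.
exists L.+2; apply/andP; split=> //.
rewrite /Rn expnS; apply: leq_trans (leqnSn L) _; apply: leq_trans (leqnSn _) _.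
by rewrite leq_pmulr // expn_gt0.
Qed.
Definition Kof L := ex_minn (exK L).
Definition TT K := 2 * (K * Rn) + 5.
Definition WA K := K.-1 * (TT K).+1.
Definition WB K := K.-1.
Definition cand K lo s d := lo + d * K ^ s.

Inductive st := P1 of nat | DA of nat | DB of nat & seq bool
  | SA of nat & nat & nat | SB of nat & nat & nat & seq bool | SD of nat.

Definition nxt (x : st) : option (bool * nat) :=
  match x with
  | P1 _ => Some (false, 0)
  | DA i => Some (false, tt (cc i))
  | DB _ _ => Some (true, 0)
  | SA K _ _ => Some (false, (WA K).-1)
  | SB K _ _ _ => Some (true, (WB K).-1)
  | SD _ => None
  end.

Definition startS i := SA (Kof (cc i)) 0 Rn.-1.

Definition upd (x : st) (m : seq bool) : st :=
  match x with
  | P1 i => if head false m then P1 i.+1 else startS i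
  | DA i => DB i m
  | DB i _ => if head false m then DA i.+1 else startS i
  | SA K lo s => SB K lo s m
  | SB K lo s _ => let lo' := lo + count (fun b : bool => b) m * K ^ s in
                   if s is s'.+1 then SA K lo' s' else SD lo'
  | SD l => SD l
  end.

Definition ablk A r c u :=
  if u is j.+1 then (c <= size A) && hb r c j (take c A) else c <= size A.

Definition testB B r c (m : seq bool) base T :=
  [&& nth false m base, c <= size B &
      all (fun j => nth false m (base + j.+1) == hb r c j (take c B)) (iota 0 T)].

Definition dstar B r K lo s m :=
  count (fun d => testB B r (cand K lo s d) m (d.-1 * (TT K).+1) (TT K)) (iota 1 K.-1).

Definition cA A r (x : st) (o : nat) : bool :=
  match x with
  | P1 i => cc i <= size A
  | DA i => ablk A r (cc i) o
  | SA K lo s => ablk A r (cand K lo s (o %/ (TT K).+1).+1) (o %% (TT K).+1)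
  | _ => false
  end.

Definition cB B r (x : st) (o : nat) : bool :=
  match x with
  | DB i m => testB B r (cc i) m 0 (tt (cc i))
  | SB K lo s m => o < dstar B r K lo s m
  | _ => false
  end.

Definition fin (x : st) := if x is SD l then l else 0.

Definition Good A B r :=
  all (fun c => (take c A == take c B) ||
      has (fun j => hsum r c j 0 (take c A) != hsum r c j 0 (take c B)) (iota 0 (tt c)))
    (iota 1 (minn (size A) (size B))).

Lemma testB_honest A B r c m base T :
  (forall u, u <= T -> nth false m (base + u) = ablk A r c u) ->
  testB B r c m base T = [&& c <= size A, c <= size B &
     all (fun j => ((c <= size A) && hb r c j (take c A)) == hb r c j (take c B)) (iota 0 T)].
Proof.
move=> H; rewrite /testB -[base]addn0 H // addn0; congr [&& _, _ & _].
by apply/eq_in_all => j; rewrite mem_iota add0n => Hj; rewrite H.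
Qed.

Lemma test_correct A B r c T : Good A B r -> tt c <= T ->
  [&& c <= size A, c <= size B &
     all (fun j => ((c <= size A) && hb r c j (take c A)) == hb r c j (take c B)) (iota 0 T)]
  = (c <= lcp A B).
Proof.
move=> HG HT.
have Hl := lcp_le A B.
case hA: (c <= size A); last first.
  apply/esym/negbTE; rewrite -ltnNge; move/negbT: hA; rewrite -ltnNge => hA; lia.
case hB: (c <= size B); last first.
  apply/esym/negbTE; rewrite -ltnNge; move/negbT: hB; rewrite -ltnNge => hB; lia.
have Hm : c <= minn (size A) (size B) by rewrite leq_min hA hB.
rewrite lcp_take //=.
case: eqP => [->|Hne]; first by apply/allP => j _; rewrite eqxx.
apply/negbTE/allPn.
have Hc : c \in iota 1 (minn (size A) (size B)).
  rewrite mem_iota; have Hc0 : 0 < c.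
    by case: (posnP c) Hne => // ->; rewrite !take0.
  lia.
have := allP HG c Hc; case: eqP => //= _ /hasP[j]; rewrite mem_iota add0n => /andP[_ Hj] Hneq.
exists j; first by rewrite mem_iota add0n /= (leq_trans Hj HT).
by rewrite /hb Hj.
Qed.

Local Notation "'Runs' A B r" := (runs nxt upd cA cB A B r) (at level 10, A at level 9, B at level 9, r at level 9).

Lemma WA_gt0 K : 2 <= K -> 0 < WA K.
Proof. by move=> HK; rewrite /WA muln_gt0; apply/andP; split=> //; lia. Qed.

Lemma SA_nth A r K lo s d u : 2 <= K -> 1 <= d <= K.-1 -> u <= TT K ->
  nth false (mkseq (cA A r (SA K lo s)) (WA K).-1.+1) (d.-1 * (TT K).+1 + u)
  = ablk A r (cand K lo s d) u.
Proof.
move=> HK /andP[Hd1 Hd2] Hu.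
rewrite prednK ?WA_gt0 //.
have Hlt : d.-1 * (TT K).+1 + u < WA K.
  rewrite /WA; apply: (@leq_trans (d.-1.+1 * (TT K).+1)).
    rewrite mulSn; lia.
  by rewrite leq_mul2r prednK // Hd2 orbT.
rewrite nth_mkseq //= divnMDl // modnMDl divn_small ?ltnS // modn_small ?ltnS //.
by rewrite addn0 prednK.
Qed.

Lemma count_mkseq_lt d n : count (fun b : bool => b) (mkseq (fun o => o < d) n) = minn d n.
Proof.
elim: n => [|n IH]; first by rewrite minn0.
rewrite mkseqS -cats1 count_cat IH /= addn0.
case: (ltnP n d) => H; lia.
Qed.

Lemma count_iota_le q n : count (fun d => d <= q) (iota 1 n) = minn q n.
Proof.
elim: n => [|n IH]; first by rewrite minn0.
rewrite -[n.+1]addn1 iotaD count_cat IH /= addn0.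
case: (leqP (1 + n) q) => H; lia.
Qed.

Lemma tt_bound c K : 2 <= K -> c <= K ^ Rn -> tt c <= TT K.
Proof.
move=> HK Hc; rewrite /tt /TT leq_add2r leq_mul2l /=.
apply: leq_trans (leq_trunc_log 2 Hc) _.
have : K ^ Rn <= 2 ^ (K * Rn).
  by rewrite expnM leq_exp2r // ltnW // ltn_expl.
move/(leq_trunc_log 2); by rewrite trunc_expnK.
Qed.

Lemma dstar_correct A B r K lo s : 2 <= K -> Good A B r ->
  lo <= lcp A B < lo + K ^ s.+1 -> lo + K ^ s.+1 <= K ^ Rn ->
  dstar B r K lo s (mkseq (cA A r (SA K lo s)) (WA K).-1.+1) = (lcp A B - lo) %/ K ^ s.
Proof.
move=> HK HG /andP[H1 H2] H3.
have HKs : 0 < K ^ s by rewrite expn_gt0; lia.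
set q := (lcp A B - lo) %/ K ^ s.
have Hq : q <= K.-1.
  rewrite -ltnS prednK; last by lia.
  rewrite ltn_divLR // -expnS; lia.
rewrite /dstar -(minn_idPl Hq) -count_iota_le.
apply/eq_in_count => d; rewrite mem_iota => Hd.
have Hd' : 1 <= d <= K.-1 by lia.
rewrite (@testB_honest A); last by move=> u Hu; rewrite SA_nth.
have Hc : cand K lo s d <= K ^ Rn.
  apply: leq_trans H3; rewrite /cand leq_add2l expnS.
  apply: leq_mul => //; lia.
rewrite (test_correct HG (tt_bound HK Hc)).
rewrite /q leq_divRL // /cand; lia.
Qed.

Lemma search_run A B r K lo s : 2 <= K -> exists lof,
  Runs A B r (SA K lo s) (s.+1 * ((WA K).-1.+1 + (WB K).-1.+1))
    (flatten (nseq s.+1 (nseq (WA K).-1.+1 false ++ nseq (WB K).-1.+1 true))) (SD lof) /\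
  (Good A B r -> lo <= lcp A B < lo + K ^ s.+1 -> lo + K ^ s.+1 <= K ^ Rn -> lof = lcp A B).
Proof.
move=> HK; elim: s lo => [|s IH] lo.
  set m := mkseq (cA A r (SA K lo 0)) (WA K).-1.+1.
  set m' := mkseq (cB B r (SB K lo 0 m)) (WB K).-1.+1.
  exists (lo + count (fun b : bool => b) m' * K ^ 0); split.
    rewrite (_ : 1 * _ = (WA K).-1.+1 + ((WB K).-1.+1 + 0)); last by rewrite mul1n addn0.
    rewrite /= -catA; apply: RStep => //; apply: RStep => //.
    by apply: RHalt.
  move=> HG Hl Hb.
  rewrite /m' count_mkseq_lt /= (dstar_correct HK HG Hl Hb) expn0 divn1.
  rewrite (minn_idPl _); first by lia.
  rewrite /WB prednK; last by lia.
  have := lcp_le A B; rewrite expn1 in Hl; lia.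
set m := mkseq (cA A r (SA K lo s.+1)) (WA K).-1.+1.
set m' := mkseq (cB B r (SB K lo s.+1 m)) (WB K).-1.+1.
set lo' := lo + count (fun b : bool => b) m' * K ^ s.+1.
have [lof [Hr Hc]] := IH lo'.
exists lof; split.
  rewrite mulSn /= -catA -addnA; apply: RStep => //; apply: RStep => //.
move=> HG Hl Hb.
have HKs : 0 < K ^ s.+1 by rewrite expn_gt0; lia.
have Hcnt : count (fun b : bool => b) m' = (lcp A B - lo) %/ K ^ s.+1.
  rewrite /m' count_mkseq_lt /= (dstar_correct HK HG Hl Hb).
  apply/minn_idPl; rewrite /WB prednK; last by lia.
  rewrite -ltnS prednK; last by lia.
  rewrite ltn_divLR // -expnS; lia.
set q := (lcp A B - lo) %/ K ^ s.+1 in Hcnt.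
have Hq : q < K by rewrite ltn_divLR // -expnS; lia.
have E1 := divn_eq (lcp A B - lo) (K ^ s.+1).
have E2 := ltn_pmod (lcp A B - lo) HKs.
have E3 : q.+1 * K ^ s.+1 <= K * K ^ s.+1 by rewrite leq_mul2r Hq orbT.
rewrite -/q in E1 E3; rewrite expnS in Hl Hb.
apply: Hc => //; rewrite /lo' Hcnt; rewrite mulSn in E3; lia.
Qed.

Definition SBits K := Rn.-1.+1 * ((WA K).-1.+1 + (WB K).-1.+1).
Definition spS K := flatten (nseq Rn.-1.+1 (nseq (WA K).-1.+1 false ++ nseq (WB K).-1.+1 true)).

Lemma exI m : exists i, m < cc i.
Proof.
exists m; rewrite /cc; apply: leq_trans (ltn_expl m (isT : 1 < 3)) _.
by rewrite leq_pexp2l // ltnW // ltn_expl.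
Qed.
Definition istar m := ex_minn (exI m).

Lemma istarP m : m < cc (istar m) /\ forall i, i < istar m -> cc i <= m.
Proof.
rewrite /istar; case: ex_minnP => i Hi Hmin; split=> // j Hj.
by rewrite leqNgt; apply/negP => /Hmin; rewrite leqNgt Hj.
Qed.

Lemma KofP L : 2 <= Kof L /\ L <= Kof L ^ Rn.
Proof. by rewrite /Kof; case: ex_minnP => k /andP[H1 H2] _. Qed.

Lemma Kof_min L : 3 <= Kof L -> (Kof L).-1 ^ Rn < L.
Proof.
rewrite /Kof; case: ex_minnP => k /andP[H1 H2] Hmin Hk.
rewrite ltnNge; apply/negP => H.
have H' := Hmin k.-1; rewrite H andbT in H'.
have : k <= k.-1 by apply: H'; lia.
lia.
Qed.

Lemma start_run A B r i : exists lof,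
  Runs A B r (startS i) (SBits (Kof (cc i))) (spS (Kof (cc i))) (SD lof) /\
  (Good A B r -> lcp A B < cc i -> lof = lcp A B).
Proof.
have [HK HL] := KofP (cc i).
have [lof [H1 H2]] := search_run A B r 0 Rn.-1 HK.
exists lof; split=> // HG Hl; have E : Rn.-1.+1 = Rn by [].
apply: H2 => //; rewrite E; lia.
Qed.

Lemma p1_run A B r d i : istar (size A) - i = d -> i <= istar (size A) -> exists lof,
  Runs A B r (P1 i) (d.+1 + SBits (Kof (cc (istar (size A)))))
     (nseq d.+1 false ++ spS (Kof (cc (istar (size A))))) (SD lof) /\
  (Good A B r -> lof = lcp A B).
Proof.
have [Hs Hmin] := istarP (size A).
elim: d i => [|d IH] i Hd Hi.
  have -> : i = istar (size A) by lia.
  have [lof [H1 H2]] := start_run A B r (istar (size A)).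
  exists lof; split.
    apply: RStep => //=; have Hs' := Hs; rewrite ltnNge in Hs'; rewrite (negbTE Hs'); exact: H1.
  move=> HG; apply: H2 => //; apply: leq_ltn_trans Hs; apply: leq_trans (lcp_le A B) (geq_minl _ _).
have Hlt : i < istar (size A) by lia.
have [lof [H1 H2]] := IH i.+1 ltac:(lia) Hlt.
exists lof; split=> //.
set X := SBits _; set Y := spS _.
rewrite (_ : d.+2 + X = 0.+1 + (d.+1 + X)); last by rewrite add1n addSn.
change (nseq d.+2 false ++ Y) with (nseq 1 false ++ (nseq d.+1 false ++ Y)).
apply: RStep => //=; rewrite Hmin //; exact: H1.
Qed.

Lemma nseq1 (b : bool) : nseq 1 b = [:: b].
Proof. by []. Qed.


Lemma ltn_cc i : i < cc i.
Proof.
rewrite /cc; apply: leq_trans (ltn_expl i (isT : 1 < 3)) _.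
by rewrite leq_pexp2l // ltnW // ltn_expl.
Qed.

Lemma dbl_step A B r i :
  (cc i <= size B -> exists bits sp f, Runs A B r (DA i.+1) bits sp f) ->
  exists bits sp f, Runs A B r (DA i) bits sp f.
Proof.
move=> IH.
set m := mkseq (cA A r (DA i)) (tt (cc i)).+1.
have [bits [sp [f H]]] : exists bits sp f,
    Runs A B r (if testB B r (cc i) m 0 (tt (cc i)) then DA i.+1 else startS i) bits sp f.
  case Ht: (testB _ _ _ _ _ _).
    by apply: IH; move: Ht; rewrite /testB => /and3P[].
  by have [lof [H1 _]] := start_run A B r i; do 3 eexists; exact: H1.
do 3 eexists; apply: (RStep' (s' := DB i m)) => //.
by apply: (RStep' (s' := if testB B r (cc i) m 0 (tt (cc i)) then DA i.+1 else startS i)) => //; exact: H.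
Qed.

Lemma dbl_term A B r i : exists bits sp f, Runs A B r (DA i) bits sp f.
Proof.
have : size B - i <= size B - i by [].
move: {-1}(size B - i) => n; elim: n i => [|n IH] i Hi; apply: dbl_step => Hc.
  have := ltn_cc i; lia.
apply: IH; have := ltn_cc i; lia.
Qed.

Lemma dbl_ideal A B r d i : Good A B r -> istar (lcp A B) - i = d -> i <= istar (lcp A B) ->
  Runs A B r (DA i)
    (\sum_(i <= k < (istar (lcp A B)).+1) (tt (cc k)).+2 + SBits (Kof (cc (istar (lcp A B)))))
    (flatten [seq nseq (tt (cc k)).+1 false ++ [:: true] | k <- iota i d.+1]
       ++ spS (Kof (cc (istar (lcp A B))))) (SD (lcp A B)).
Proof.
move=> HG; have [Hs Hmin] := istarP (lcp A B).
set I := istar (lcp A B).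
have Htest : forall j, testB B r (cc j) (mkseq (cA A r (DA j)) (tt (cc j)).+1) 0 (tt (cc j))
                       = (cc j <= lcp A B).
  move=> j; rewrite (@testB_honest A); first exact: test_correct.
  by move=> u Hu; rewrite add0n nth_mkseq.
elim: d i => [|d IH] i Hd Hi.
  have Ei : i = I by lia.
  rewrite Ei big_nat1.
  have [lof [H1 H2]] := start_run A B r I.
  have Hl := H2 HG Hs; rewrite Hl in H1.
  rewrite /= cats0 -catA.
  rewrite (_ : (tt (cc I)).+2 + _ = (tt (cc I)).+1 + (0.+1 + SBits (Kof (cc I)))); last by lia.
  apply: (RStep' (s' := DB I (mkseq (cA A r (DA I)) (tt (cc I)).+1))) => //.
  apply: (RStep' (s' := startS I)) => //.
  change ((if testB B r (cc I) (mkseq (cA A r (DA I)) (tt (cc I)).+1) 0 (tt (cc I))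
           then DA I.+1 else startS I) = startS I).
  by rewrite Htest leqNgt Hs.
have Hlt : i < I by lia.
rewrite big_ltn ?ltnS //.
have H := IH i.+1 ltac:(lia) Hlt.
have E4 : forall x y z w : seq bool, x ++ (y ++ (z ++ w)) = ((x ++ y) ++ z) ++ w.
  by move=> *; rewrite !catA.
rewrite (_ : flatten [seq nseq (tt (cc k)).+1 false ++ [:: true] | k <- iota i d.+2]
          ++ spS (Kof (cc I)) = nseq (tt (cc i)).+1 false ++ (nseq 1 true ++
        (flatten [seq nseq (tt (cc k)).+1 false ++ [:: true] | k <- iota i.+1 d.+1]
          ++ spS (Kof (cc I))))); last by rewrite E4.
rewrite (_ : (tt (cc i)).+2 + _ + _ = (tt (cc i)).+1 + (0.+1 +
   (\sum_(i.+1 <= k < I.+1) (tt (cc k)).+2 + SBits (Kof (cc I))))); last by lia.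
apply: (RStep' (s' := DB i (mkseq (cA A r (DA i)) (tt (cc i)).+1))) => //.
apply: (RStep' (s' := DA i.+1)) => //.
change ((if testB B r (cc i) (mkseq (cA A r (DA i)) (tt (cc i)).+1) 0 (tt (cc i))
         then DA i.+1 else startS i) = DA i.+1).
by rewrite Htest Hmin.
Qed.


Lemma tt_le c : tt c <= 2 * c + 5.
Proof.
rewrite /tt leq_add2r leq_mul2l /=.
case: (posnP c) => [->|Hc]; first by rewrite trunc_log0.
apply: leq_trans (ltnW (ltn_expl _ (isT : 1 < 2))) (trunc_logP _ _) => //.
Qed.

Lemma idx_lt c j q s : j < tt c -> s < SS -> q < c -> idx c j q s < tt c * SS * c.
Proof.
move=> Hj Hs Hq; rewrite /idx.
have H1 : j + tt c * (s + SS * q) < tt c * (s.+1 + SS * q).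
  by rewrite mulnDr mulnS mulnDr ltn_add2r.
apply: leq_trans H1 _; rewrite -mulnA leq_mul2l; apply/orP; right.
apply: (@leq_trans (SS * q.+1)); first by rewrite mulnS leq_add2r.
by rewrite leq_mul2l Hq orbT.
Qed.

Definition Nb m := (2 * m + 5) * SS * m.

Lemma hsum_ext r r' c j q x :
  (forall q' (a : Sigma), q <= q' < q + size x -> r (idx c j q' (enum_rank a)) = r' (idx c j q' (enum_rank a))) ->
  hsum r c j q x = hsum r' c j q x.
Proof.
elim: x q => [//|a x IH] q H /=.
rewrite H; last by rewrite /= leqnn addnS ltnS leq_addr.
congr (_ (+) _); apply: IH => q' b /andP[H1 H2]; apply: H.
by rewrite /= addnS (ltnW H1) H2.
Qed.

Lemma hb_ext r r' c j X : c <= size X -> (forall i, i < Nb (size X) -> r i = r' i) ->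
  hb r c j (take c X) = hb r' c j (take c X).
Proof.
move=> Hc H; rewrite /hb; case Hj: (j < tt c) => //=.
apply: hsum_ext => q a /andP[_ Hq]; apply: H.
rewrite add0n size_takel // in Hq.
apply: leq_trans (idx_lt Hj (ltn_ord _) Hq) _.
by rewrite /Nb leq_mul // leq_mul // (leq_trans (tt_le c)) // leq_add2r leq_mul2l Hc.
Qed.

Lemma ablk_ext A r r' c u : (forall i, i < Nb (size A) -> r i = r' i) ->
  ablk A r c u = ablk A r' c u.
Proof.
move=> H; case: u => [//|j] /=; case Hc: (c <= size A) => //=; exact: hb_ext.
Qed.

Lemma testB_ext B r r' c m base T : (forall i, i < Nb (size B) -> r i = r' i) ->
  testB B r c m base T = testB B r' c m base T.
Proof.
move=> H; rewrite /testB; case: (nth false m base) => //=; case Hc: (c <= size B) => //=.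
by apply/eq_all => j; rewrite (hb_ext _ Hc H).
Qed.

Lemma cA_ext A r r' x o : (forall i, i < Nb (size A) -> r i = r' i) -> cA A r x o = cA A r' x o.
Proof. by move=> H; case: x => //= *; apply: ablk_ext. Qed.

Lemma cB_ext B r r' x o : (forall i, i < Nb (size B) -> r i = r' i) -> cB B r x o = cB B r' x o.
Proof.
move=> H; case: x => //= *; first exact: testB_ext.
by rewrite /dstar; congr (_ < _); apply: eq_count => d; apply: testB_ext.
Qed.

Lemma idx_inj c j q s j' q' s' : j < tt c -> j' < tt c -> s < SS -> s' < SS ->
  idx c j q s = idx c j' q' s' -> [/\ j = j', q = q' & s = s'].
Proof.
move=> Hj Hj' Hs Hs'; rewrite /idx => E.
have Ht : 0 < tt c by rewrite /tt; lia.
have E1 := congr1 (fun z => z %% tt c) E; have E2 := congr1 (fun z => z %/ tt c) E.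
rewrite /= ![j + _]addnC ![j' + _]addnC ![tt c * _]mulnC !modnMDl !modn_small // in E1.
rewrite /= ![j + _]addnC ![j' + _]addnC ![tt c * _]mulnC !divnMDl // !divn_small // !addn0 in E2.
have HS : 0 < SS by case: (posnP SS) Hs => // ->.
have E3 := congr1 (fun z => z %% SS) E2; have E4 := congr1 (fun z => z %/ SS) E2.
rewrite /= ![s + _]addnC ![s' + _]addnC ![SS * _]mulnC !modnMDl !modn_small // in E3.
rewrite /= ![s + _]addnC ![s' + _]addnC ![SS * _]mulnC !divnMDl // !divn_small // !addn0 in E4.
by split.
Qed.

Lemma hsum_cat r c j q x1 x2 :
  hsum r c j q (x1 ++ x2) = hsum r c j q x1 (+) hsum r c j (q + size x1) x2.
Proof.
elim: x1 q => [|a x1 IH] q /=; first by rewrite addn0.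
by rewrite IH addbA addnS.
Qed.

Lemma seq_diff (T : eqType) (x y : seq T) : x != y -> size x = size y ->
  exists u a b x2 y2, [/\ x = u ++ a :: x2, y = u ++ b :: y2 & a != b].
Proof.
elim: x y => [|a x IH] [|b y] //=.
move=> Hne [Hs]; case: (eqVneq a b) => Hab.
  subst b; have Hxy : x != y by apply: contra Hne => /eqP ->.
  have [u [a' [b' [x2 [y2 [E1 E2 E3]]]]]] := IH y Hxy Hs.
  by exists (a :: u), a', b', x2, y2; rewrite E1 E2.
by exists [::], a, b, x, y.
Qed.

Lemma ext_lt N (w : {ffun 'I_N -> bool}) i (H : i < N) : ext w i = w (Ordinal H).
Proof. by rewrite /ext insubT /=; congr (w _); apply: val_inj. Qed.

Lemma card_bad A B N c : c <= minn (size A) (size B) -> tt c * SS * c <= N ->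
  #|[set w : {ffun 'I_N -> bool} | (take c A != take c B) &&
     all (fun j => hsum (ext w) c j 0 (take c A) == hsum (ext w) c j 0 (take c B)) (iota 0 (tt c))]|
   * 2 ^ tt c <= 2 ^ N.
Proof.
move=> Hc HN.
set x := take c A; set y := take c B.
have Hsx : size x = c by rewrite size_takel //; apply: leq_trans Hc (geq_minl _ _).
have Hsy : size y = c by rewrite size_takel //; apply: leq_trans Hc (geq_minr _ _).
case: (eqVneq x y) => Hxy.
  rewrite (_ : [set w | _] = set0) ?cards0 //; apply/setP => w; rewrite !inE Hxy eqxx //.
have [u [a [b [x2 [y2 [Ex Ey Hab]]]]]] := seq_diff Hxy (etrans Hsx (esym Hsy)).
set p := size u.
have Hpu : size u = p by [].
clearbody p.
have Hp : p < c by rewrite -Hsx Ex size_cat /= Hpu; lia.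
set bad := [set w : {ffun 'I_N -> bool} | _].
pose flip (w : {ffun 'I_N -> bool}) (v : {ffun 'I_(tt c) -> bool}) : {ffun 'I_N -> bool} :=
  [ffun i : 'I_N => w i (+) [exists j : 'I_(tt c), v j && (val i == idx c j p (enum_rank a))]].
have Hflip : forall w v (j : 'I_(tt c)) q (s : 'I_SS), q < c ->
    ext (flip w v) (idx c j q s) = ext w (idx c j q s) (+) [&& q == p, s == enum_rank a & v j].
  move=> w v j q s Hq.
  have Hi : idx c j q s < N := leq_trans (idx_lt (ltn_ord j) (ltn_ord s) Hq) HN.
  rewrite !(ext_lt _ Hi) ffunE /=; congr (_ (+) _).
  apply/existsP/idP.
    case=> j' /andP[Hv /eqP E].
    have [E1 E2 E3] := idx_inj (ltn_ord j) (ltn_ord j') (ltn_ord s) (ltn_ord _) E.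
    have -> : j = j' by apply: val_inj.
    by rewrite E2 eqxx /= Hv andbT; apply/eqP; apply: val_inj.
  by case/and3P=> /eqP -> /eqP -> Hv; exists j; rewrite Hv eqxx.
have Hsz : p + (size x2).+1 = c by rewrite -Hsx Ex size_cat /= Hpu.
have Hsz' : p + (size y2).+1 = c by rewrite -Hsy Ey size_cat /= Hpu.
have Hseg : forall w v (j : 'I_(tt c)) q0 z, p < q0 -> q0 + size z <= c ->
    hsum (ext (flip w v)) c j q0 z = hsum (ext w) c j q0 z.
  move=> w v j q0 z H1 H2; apply: hsum_ext => q' a' /andP[H3 H4].
  rewrite (Hflip w v j q' (enum_rank a')); last by lia.
  have Hq : (q' == p) = false by apply/negbTE; rewrite neq_ltn; apply/orP; right; lia.
  by rewrite Hq addbF.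
have Hu : forall w v (j : 'I_(tt c)), hsum (ext (flip w v)) c j 0 u = hsum (ext w) c j 0 u.
  move=> w v j; apply: hsum_ext => q' a' /andP[H3 H4].
  move: H4; rewrite add0n Hpu => H4; rewrite (Hflip w v j q' (enum_rank a')); last by lia.
  have Hq : (q' == p) = false by apply/negbTE; rewrite neq_ltn; apply/orP; left; lia.
  by rewrite Hq addbF.
have Hflipx : forall w v (j : 'I_(tt c)),
    hsum (ext (flip w v)) c j 0 x = hsum (ext w) c j 0 x (+) v j.
  move=> w v j; rewrite Ex !hsum_cat add0n /= Hpu Hu (Hseg w v j p.+1 x2) ?ltnSn //; last by rewrite addSnnS Hsz.
  rewrite (Hflip w v j p (enum_rank a) Hp) !eqxx /=.
  by rewrite !addbA addbAC.
have Hflipy : forall w v (j : 'I_(tt c)),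
    hsum (ext (flip w v)) c j 0 y = hsum (ext w) c j 0 y.
  move=> w v j; rewrite Ey !hsum_cat add0n /= Hpu Hu (Hseg w v j p.+1 y2) ?ltnSn //; last by rewrite addSnnS Hsz'.
  rewrite (Hflip w v j p (enum_rank b) Hp) !eqxx /=.
  by rewrite (inj_eq enum_rank_inj) eq_sym (negbTE Hab) /= addbF.
pose g (w' : {ffun 'I_N -> bool}) : {ffun 'I_(tt c) -> bool} :=
  [ffun j : 'I_(tt c) => hsum (ext w') c j 0 x (+) hsum (ext w') c j 0 y].
have Hg : forall w v, w \in bad -> g (flip w v) = v.
  move=> w v; rewrite inE => /andP[_ /allP Hall]; apply/ffunP => j.
  rewrite ffunE Hflipx Hflipy.
  have Hj : (j : nat) \in iota 0 (tt c) by rewrite mem_iota add0n /=.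
  have /eqP -> := Hall j Hj.
  by rewrite addbAC addbb.
have Hff : forall w v, flip (flip w v) v = w.
  by move=> w v; apply/ffunP => i; rewrite !ffunE -addbA addbb addbF.
pose F (wv : {ffun 'I_N -> bool} * {ffun 'I_(tt c) -> bool}) := flip wv.1 wv.2.
have Hinj : {in setX bad setT &, injective F}.
  move=> [w1 v1] [w2 v2]; rewrite !in_setX !in_setT !andbT /= => H1 H2 E.
  have Ev : v1 = v2 by rewrite -(Hg w1 v1 H1) -(Hg w2 v2 H2); congr g.
  have E' : flip w1 v1 = flip w2 v2 := E.
  have Ew : w1 = w2 by rewrite -(Hff w1 v1) E' -Ev Hff.
  by rewrite Ev Ew.
have := card_in_imset Hinj; rewrite cardsX cardsT card_ffun card_bool card_ord => <-.
have -> : 2 ^ N = #|{ffun 'I_N -> bool}| by rewrite card_ffun card_bool card_ord.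
exact: max_card.
Qed.


Lemma geo N K : 2 * K + 5 <= N ->
  \sum_(1 <= c < 2 ^ K) 2 ^ (N - tt c) + 2 ^ (N - K - 4) <= 2 ^ (N - 4).
Proof.
elim: K => [|K IH] HN.
  by rewrite expn0 big_geq // subn0.
have IH' := IH ltac:(lia).
rewrite (@big_cat_nat _ _ _ (2 ^ K)) //=; last first.
  by rewrite leq_exp2l.
  by rewrite expn_gt0.
have Eb : \sum_(2 ^ K <= c < 2 ^ K.+1) 2 ^ (N - tt c) = 2 ^ (N - K - 5).
  rewrite (@eq_big_nat _ _ _ _ _ _ (fun _ => 2 ^ (N - (2 * K + 5)))); last first.
    move=> c /andP[H1 H2]; congr (2 ^ (N - _)); rewrite /tt (@trunc_log_eq 2 K c) //.
    by rewrite H1 H2.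
  rewrite sum_nat_const_nat expnS mul2n -addnn addnK -expnD; congr (2 ^ _); lia.
have E1 : 2 ^ (N - K - 4) = 2 ^ (N - K - 5) + 2 ^ (N - K - 5).
  by rewrite addnn -mul2n -expnS; congr (2 ^ _); lia.
have E2 : N - K.+1 - 4 = N - K - 5 by lia.
rewrite Eb E2; lia.
Qed.

Definition badp A B N c (w : {ffun 'I_N -> bool}) :=
  (take c A != take c B) &&
  all (fun j => hsum (ext w) c j 0 (take c A) == hsum (ext w) c j 0 (take c B)) (iota 0 (tt c)).

Lemma cardsU_le (T : finType) (X Y : {set T}) : #|X :|: Y| <= #|X| + #|Y|.
Proof. by rewrite -cardsUI leq_addr. Qed.

Lemma card_has A B N (s : seq nat) :
  #|[set w : {ffun 'I_N -> bool} | has (fun c => badp A B c w) s]|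
    <= \sum_(c <- s) #|[set w : {ffun 'I_N -> bool} | badp A B c w]|.
Proof.
elim: s => [|c s IH].
  by rewrite big_nil (_ : [set w | _] = set0) ?cards0 //; apply/setP => w; rewrite !inE.
rewrite big_cons.
rewrite (_ : [set w | has _ (c :: s)] =
   [set w : {ffun 'I_N -> bool} | badp A B c w] :|: [set w | has (fun c => badp A B c w) s]).
  apply: leq_trans (cardsU_le _ _) _; rewrite leq_add2l; exact: IH.
by apply/setP => w; rewrite !inE.
Qed.

Lemma prob_bad A B N : 2 * (size A + size B) + 7 <= N ->
  (2 * (size A + size B) + 5) * SS * (size A + size B) <= N ->
  #|[set w : {ffun 'I_N -> bool} | ~~ Good A B (ext w)]| * 16 <= 2 ^ N.
Proof.
move=> HN1 HN2.
set M := minn (size A) (size B).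
have HM : M <= size A + size B by rewrite /M; lia.
have Hsub : [set w : {ffun 'I_N -> bool} | ~~ Good A B (ext w)] \subset
            [set w | has (fun c => badp A B c w) (iota 1 M)].
  apply/subsetP => w; rewrite !inE /Good -has_predC => /hasP[c Hc /= Hn].
  apply/hasP; exists c => //; rewrite /badp.
  move: Hn; rewrite negb_or => /andP[-> Hh] /=.
  by rewrite -all_predC in Hh; apply: sub_all Hh => j /=; rewrite negbK.
have H1 := leq_trans (subset_leq_card Hsub) (card_has A B N (iota 1 M)).
have H2 : \sum_(c <- iota 1 M) #|[set w : {ffun 'I_N -> bool} | badp A B c w]|
          <= \sum_(c <- iota 1 M) 2 ^ (N - tt c).
  rewrite big_seq_cond [X in _ <= X]big_seq_cond; apply: leq_sum => c; rewrite andbT mem_iota => Hc.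
  have Hc' : c <= M by lia.
  have Htt : tt c * SS * c <= N.
    apply: leq_trans HN2; apply: leq_mul; last lia.
    apply: leq_mul => //; apply: leq_trans (tt_le c) _; lia.
  have Hb := card_bad Hc' Htt.
  have Ht : tt c <= N.
    apply: leq_trans HN1; apply: leq_trans (tt_le c) _; lia.
  rewrite -(@leq_pmul2r (2 ^ tt c)) ?expn_gt0 // -expnD subnK //.
have H3 : \sum_(c <- iota 1 M) 2 ^ (N - tt c) <= \sum_(1 <= c < 2 ^ M.+1) 2 ^ (N - tt c).
  have -> : \sum_(c <- iota 1 M) 2 ^ (N - tt c) = \sum_(1 <= c < M.+1) 2 ^ (N - tt c).
    by rewrite /index_iota subn1.
  rewrite (@big_cat_nat _ _ _ M.+1 1 (2 ^ M.+1)) //= ?leq_addr //.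
  exact: ltn_trans (ltnSn M) (ltn_expl _ (isT : 1 < 2)).
have H4 := geo (K := M.+1) (N := N) ltac:(lia).
have H5 : 2 ^ N = 2 ^ (N - 4) * 16 by rewrite -(expnD 2 (N - 4) 4) subnK //; lia.
rewrite H5 leq_mul2r /=.
apply: leq_trans H1 _; apply: leq_trans H2 _; apply: leq_trans H3 _; apply: leq_trans _ H4; apply: leq_addr.
Qed.


Lemma cc_Kof I : 3 ^ I <= Kof (cc I) * Rn.
Proof.
have [HK HL] := KofP (cc I).
have H : Kof (cc I) ^ Rn <= 3 ^ (Kof (cc I) * Rn).
  by rewrite expnM leq_exp2r // ltnW // ltn_expl.
have := leq_trans HL H; rewrite /cc leq_exp2l //.
Qed.

Lemma SBits_le K : 2 <= K -> SBits K <= 9 * (K * K) * (Rn * Rn).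
Proof.
move=> HK; have HB : 0 < WB K by rewrite /WB; lia.
rewrite /SBits (prednK (WA_gt0 HK)) (prednK HB).
rewrite /WA /WB /TT.
have H1 : K.-1 * (2 * (K * Rn) + 5).+1 + K.-1 <= K * (9 * K * Rn).
  have HKR : 1 <= K * Rn by rewrite muln_gt0; apply/andP; split; [lia | by []].
  have E : K.-1 * (2 * (K * Rn) + 5).+1 + K.-1 = K.-1 * (2 * (K * Rn) + 7).
    by rewrite -mulnSr; congr (_ * _); lia.
  rewrite E; apply: leq_mul; first by lia.
  rewrite -mulnA; lia.
have -> : Rn.-1.+1 = Rn by [].
apply: leq_trans (leq_mul (leqnn Rn) H1) _.
nia.
Qed.

Lemma tt_cc k : (tt (cc k)).+2 <= 4 * 3 ^ k + 7.
Proof.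
rewrite /tt /cc.
have H : trunc_log 2 (3 ^ 3 ^ k) <= 2 * 3 ^ k.
  have : 3 ^ 3 ^ k <= 2 ^ (2 * 3 ^ k) by rewrite expnM leq_exp2r // expn_gt0.
  by move/(leq_trunc_log 2); rewrite trunc_expnK.
lia.
Qed.

Lemma sum_dbl I : \sum_(0 <= k < I.+1) (tt (cc k)).+2 <= 18 * 3 ^ I.
Proof.
elim: I => [|I IH]; first by rewrite big_nat1; apply: leq_trans (tt_cc 0) _.
rewrite big_nat_recr //=; have := tt_cc I.+1; rewrite expnS; lia.
Qed.

Lemma nblocks_blk a b : nblocks (nseq a false ++ nseq b true) <= 2.
Proof. by apply: leq_trans (nblocks_cat _ _) _; rewrite -[2]/(1 + 1); apply: leq_add; apply: nblocks_nseq. Qed.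

Lemma nblocks_spS K : nblocks (spS K) <= 2 * Rn.
Proof.
apply: leq_trans (nblocks_flatten _) _.
rewrite map_nseq sumn_nseq; apply: leq_trans (leq_mul (nblocks_blk _ _) (leqnn _)) _; by rewrite mulnC.
Qed.

Lemma sumn_nblocks (s : seq (seq bool)) : all (fun x => nblocks x <= 2) s ->
  sumn (map nblocks s) <= 2 * size s.
Proof.
elim: s => [//|x s IH] /andP[Hx Hs].
rewrite [map _ _]/= [sumn _]/= [size _]/= mulnS; exact: leq_add Hx (IH Hs).
Qed.

Lemma nblocks_dbl i d : nblocks (flatten [seq nseq (tt (cc k)).+1 false ++ [:: true] | k <- iota i d]) <= 2 * d.
Proof.
apply: leq_trans (nblocks_flatten _) _.
have := sumn_nblocks (s := [seq nseq (tt (cc k)).+1 false ++ [:: true] | k <- iota i d]).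
rewrite size_map size_iota; apply.
by apply/allP => x /mapP[k _ ->]; exact: (nblocks_blk _ 1).
Qed.

Lemma Kbig m : Kof (cc (istar m)) = 2 \/
  (3 <= Kof (cc (istar m)) /\ (Kof (cc (istar m))).-1 ^ Rn <= m.+1 ^ 3).
Proof.
have [HK _] := KofP (cc (istar m)).
case: (ltngtP (Kof (cc (istar m))) 2) => H; [lia | right | by left].
have Hm := Kof_min H; split=> //.
have [Hs Hmin] := istarP m.
case E: (istar m) Hm Hmin => [|I] Hm Hmin.
  have H3 : 2 ^ Rn <= (Kof (cc 0)).-1 ^ Rn by rewrite leq_exp2r //; rewrite E in H; lia.
  have H4 : 4 <= 2 ^ Rn by rewrite /Rn !expnS; have := expn_gt0 2 R0; lia.
  have Hc0 : cc 0 = 3 by [].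
  have H6 : (Kof (cc 0)).-1 ^ Rn < 3 := Hm; lia.
have Hc := Hmin I (ltnSn I).
have E2 : cc I.+1 = cc I ^ 3 by rewrite /cc expnS mulnC expnM.
have Hm' : (Kof (cc I.+1)).-1 ^ Rn < cc I ^ 3 by rewrite -E2.
apply: ltnW (leq_trans Hm' _).
by rewrite leq_exp2r // leqW.
Qed.

End Proto.


Lemma expn_pow m n : expn m n = Nat.pow m n.
Proof. by elim: n => // n IH; rewrite expnS IH /= mulnE. Qed.

Lemma INR_le m n : m <= n -> (INR m <= INR n)%R.
Proof. by move/leP; apply: le_INR. Qed.

Lemma INR_mul m n : INR (m * n) = (INR m * INR n)%R.
Proof. by rewrite mulnE mult_INR. Qed.

Lemma INR_expn m n : INR (m ^ n) = (INR m ^ n)%R.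
Proof. by rewrite expn_pow pow_INR. Qed.

Lemma ln_le' x y : (0 < x)%R -> (x <= y)%R -> (ln x <= ln y)%R.
Proof.
move=> Hx Hxy; case: (Rle_lt_or_eq_dec _ _ Hxy) => H.
  by apply: Rlt_le; apply: ln_increasing.
by rewrite H; apply: Rle_refl.
Qed.

Lemma exp_le' x y : (x <= y)%R -> (exp x <= exp y)%R.
Proof.
move=> Hxy; case: (Rle_lt_or_eq_dec _ _ Hxy) => H.
  by apply: Rlt_le; apply: exp_increasing.
by rewrite H; apply: Rle_refl.
Qed.

Lemma ln_ge0 x : (1 <= x)%R -> (0 <= ln x)%R.
Proof. by move=> H; rewrite -ln_1; apply: ln_le'; lra. Qed.

Lemma Rpower_ge1 y e : (1 <= y)%R -> (0 <= e)%R -> (1 <= Rpower y e)%R.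
Proof.
move=> Hy He; rewrite /Rpower -exp_0; apply: exp_le'.
have := ln_ge0 Hy; nra.
Qed.

Lemma ln3_ge1 : (1 <= ln 3)%R.
Proof. rewrite -[X in (X <= _)%R]ln_exp; apply: ln_le'; [apply: exp_pos | apply: exp_le_3]. Qed.

Lemma real_core (a b Rn : nat) (eps : R) : (0 < eps)%R -> (6 <= INR Rn * eps)%R -> 0 < Rn ->
  1 <= a -> 1 <= b -> a ^ Rn <= b ^ 3 -> (INR (a * a) <= Rpower (INR b) eps)%R.
Proof.
move=> He HR HRn Ha Hb Hab.
have Hx : (1 <= INR a)%R by have := INR_le Ha.
have Hy : (1 <= INR b)%R by have := INR_le Hb.
have HRn' : (0 < INR Rn)%R by apply: lt_0_INR; apply/ltP.
have H1 := INR_le Hab; rewrite !INR_expn in H1.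
have H2 : (INR Rn * ln (INR a) <= 3 * ln (INR b))%R.
  have : (ln (INR a ^ Rn) <= ln (INR b ^ 3))%R by apply: ln_le' => //; apply: pow_lt; lra.
  rewrite !ln_pow; try lra.
  by rewrite (_ : INR 3 = 3%R) //= ; lra.
have Hlx := ln_ge0 Hx; have Hly := ln_ge0 Hy.
have H3 : (2 * ln (INR a) <= eps * ln (INR b))%R by nra.
rewrite INR_mul /Rpower -[X in (X <= _)%R]exp_ln; last by nra.
apply: exp_le'; rewrite ln_mult; lra.
Qed.

Lemma lglg_core (I l : nat) : (forall i, i < I -> 3 ^ (3 ^ i) <= l) ->
  (INR I <= 1 + ln (1 + ln (1 + INR l)))%R.
Proof.
move=> H.
have Hl0 : (0 <= INR l)%R by apply: pos_INR.
have L1 : (0 <= ln (1 + INR l))%R by apply: ln_ge0; lra.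
have L2 : (0 <= ln (1 + ln (1 + INR l)))%R by apply: ln_ge0; lra.
case: I H => [|I] H; first by rewrite /=; lra.
have HI := H I (ltnSn I).
have Hr := INR_le HI; rewrite INR_expn in Hr.
have H3p : (0 < INR 3)%R by apply: lt_0_INR; apply/ltP.
have E1 : (INR (3 ^ I) <= ln (1 + INR l))%R.
  apply: Rle_trans (_ : INR (3 ^ I) * ln (INR 3) <= _)%R.
    have := ln3_ge1; have : (0 <= INR (3 ^ I))%R by apply: pos_INR.
    rewrite (_ : INR 3 = 3%R); [nra | by rewrite /= ; lra].
  rewrite -ln_pow //; apply: ln_le'; first by apply: pow_lt.
  lra.
have E2 : (INR I <= ln (1 + ln (1 + INR l)))%R.
  apply: Rle_trans (_ : ln (INR (3 ^ I)) <= _)%R.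
    rewrite INR_expn ln_pow //; have := ln3_ge1; have := pos_INR I.
    rewrite (_ : INR 3 = 3%R); [nra | by rewrite /= ; lra].
  apply: ln_le'; last by lra.
  by apply: lt_0_INR; apply/ltP; rewrite expn_gt0.
rewrite S_INR; lra.
Qed.


Lemma INR_add m n : INR (m + n) = (INR m + INR n)%R.
Proof. by rewrite addnE plus_INR. Qed.

Lemma Kreal R0 eps m : (0 < eps)%R -> (6 <= INR (Rn R0) * eps)%R ->
  (INR (Kof R0 (cc (istar m)) * Kof R0 (cc (istar m))) <= 4 * Rpower (INR m + 1) eps)%R.
Proof.
move=> He HR.
have Hp : (1 <= Rpower (INR m + 1) eps)%R.
  apply: Rpower_ge1; last lra.
  have := pos_INR m; lra.
case: (Kbig R0 m) => [-> | [H3 H]].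
  rewrite INR_mul /=; lra.
set K := Kof R0 (cc (istar m)) in H3 H *.
have Hk : K * K <= 4 * (K.-1 * K.-1) by nia.
have Hc := real_core He HR (isT : 0 < Rn R0) (_ : 1 <= K.-1) (_ : 1 <= m.+1) H.
rewrite S_INR in Hc.
apply: Rle_trans (INR_le Hk) _.
rewrite INR_mul (_ : INR 4 = 4%R); last by rewrite /=; lra.
apply: Rmult_le_compat_l; first lra.
by apply: Hc; lia.
Qed.

Lemma Nb_le (Sigma : finType) s m : s <= m -> Nb Sigma s <= (2 * m + 7) * (SS Sigma).+1 * m.+1.
Proof.
move=> H; rewrite /Nb; apply: leq_mul; last lia.
apply: leq_mul; [lia | exact: leqnSn].
Qed.

Lemma card_good (Sigma : finType) (A B : seq Sigma) N :
  2 * (size A + size B) + 7 <= N ->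
  (2 * (size A + size B) + 5) * SS Sigma * (size A + size B) <= N ->
  2 * Nat.pow 2 N <= 3 * size (enum [set w : {ffun 'I_N -> bool} | Good A B (ext w)]).
Proof.
move=> H1 H2.
have Hb := prob_bad H1 H2.
rewrite -expn_pow -cardE.
have Hc := cardsC [set w : {ffun 'I_N -> bool} | Good A B (ext w)].
rewrite card_ffun card_bool card_ord in Hc.
have E : ~: [set w : {ffun 'I_N -> bool} | Good A B (ext w)] =
          [set w : {ffun 'I_N -> bool} | ~~ Good A B (ext w)].
  by apply/setP => w; rewrite !inE.
rewrite E in Hc; lia.
Qed.

Theorem lemma13 (Sigma : finType) (eps : R) : Rlt 0 eps ->
  (* (1) O(1) rounds and O(|A|^eps) communication *)
  (exists (c : R) (k : nat) (P : protocol Sigma), forall A B : seq Sigma,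
     (forall r, exists n, halts_at P A B r n /\
        pow_bound c eps (size A) n /\ (rounds P A B r n <= k)%N) /\
     prob_ge_2_3 (fun r => forall n, halts_at P A B r n ->
                                     output P A B r n = lcp A B))
  /\
  (* (2) O(lg lg l) rounds and O(l^eps) communication, l = LCP(A,B) *)
  (exists (c : R) (P : protocol Sigma), forall A B : seq Sigma,
     (forall r, exists n, halts_at P A B r n) /\
     prob_ge_2_3 (fun r => exists n, halts_at P A B r n /\
        output P A B r n = lcp A B /\
        pow_bound c eps (lcp A B) n /\
        lglg_bound c (lcp A B) (rounds P A B r n))).
Proof.
move=> He.
have [R0 HR0] := INR_archimed eps 6 He.
have HR : (6 <= INR (Rn R0) * eps)%R.
  have : (INR R0 <= INR (Rn R0))%R by apply: INR_le; rewrite /Rn; lia.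
  nra.
have HRn : 2 <= Rn R0 by [].
have HRpos : (0 <= INR (Rn R0))%R by apply: pos_INR.
split.
- exists (INR (10 * (Rn R0 * Rn R0)) * 4)%R, (2 * Rn R0 + 1),
    (mkP (P1 0) (nxt R0) (upd R0) (@cA Sigma R0) (@cB Sigma R0) fin).
  move=> A B.
  set I := istar (size A).
  set K := Kof R0 (cc I).
  have [HK HL] := KofP R0 (cc I).
  have Hrun := fun r => @p1_run Sigma R0 A B r (I - 0) 0 erefl (leq0n _).
  split.
  + move=> r; have [lof [H1 _]] := Hrun r.
    have [Hh Hr Ho] := runs_main fin H1.
    eexists; split; first exact: Hh.
    split.
    * rewrite /pow_bound.
      have Hb : (I - 0).+1 + SBits R0 K <= 10 * (Rn R0 * Rn R0) * (K * K).
        have h1 : 3 ^ I <= K * Rn R0 := cc_Kof R0 I.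
        have h2 : SBits R0 K <= 9 * (K * K) * (Rn R0 * Rn R0) := SBits_le R0 HK.
        have h3 : I.+1 <= 3 ^ I by exact: ltn_expl.
        have h4 : K * Rn R0 <= (K * K) * (Rn R0 * Rn R0).
          by apply: leq_mul; [apply: leq_pmulr; lia | apply: leq_pmulr].
        rewrite subn0; lia.
      apply: Rle_trans (INR_le Hb) _; rewrite INR_mul Rmult_assoc.
      apply: Rmult_le_compat_l; first by apply: pos_INR.
      by apply: Kreal.
    * rewrite Hr; apply: leq_trans (nblocks_cat _ _) _.
      apply: leq_trans (leq_add (nblocks_nseq _ _) (nblocks_spS R0 _)) _; lia.
  + set N := (2 * (size A + size B) + 7) * (SS Sigma).+1 * (size A + size B).+1.
    have HNA : forall r r' : nat -> bool, (forall i, i < N -> r i = r' i) ->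
        forall i, i < Nb Sigma (size A) -> r i = r' i.
      move=> r r' H i Hi; apply: H; apply: leq_trans Hi (Nb_le _ _); lia.
    have HNB : forall r r' : nat -> bool, (forall i, i < N -> r i = r' i) ->
        forall i, i < Nb Sigma (size B) -> r i = r' i.
      move=> r r' H i Hi; apply: H; apply: leq_trans Hi (Nb_le _ _); lia.
    exists N; split.
      move=> r r' Hrr'.
      have E := ext_props (P1 0) (nxt R0) (upd R0) fin
        (fun s o => cA_ext R0 s o (HNA r r' Hrr')) (fun s o => cB_ext R0 s o (HNB r r' Hrr')).
      split=> H n Hh; have [E1 _ E3] := E n.
        by rewrite -E3; apply: H; apply/E1.
      by rewrite E3; apply: H; apply/E1.
    exists (enum [set w : {ffun 'I_N -> bool} | Good A B (ext w)]); split.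
    * exact: enum_uniq.
    * move=> w; rewrite mem_enum inE => HG n Hh.
      have [lof [H1 H2]] := Hrun (ext w).
      have [Hh' _ Ho] := runs_main fin H1.
      by rewrite (halts_unique Hh Hh') Ho /= H2.
    * apply: card_good; first lia.
      rewrite /N; apply: leq_mul; last lia.
      apply: leq_mul; [lia | exact: leqnSn].
- exists (INR (27 * (Rn R0 * Rn R0)) * 4 + INR (2 * Rn R0 + 4))%R,
    (mkP (DA 0) (nxt R0) (upd R0) (@cA Sigma R0) (@cB Sigma R0) fin).
  move=> A B.
  split.
    move=> r; have [bits [sp [f H]]] := @dbl_term Sigma R0 A B r 0.
    by have [Hh _ _] := runs_main fin H; exists bits.
  set N := (2 * (size A + size B) + 7) * (SS Sigma).+1 * (size A + size B).+1.
  have HNA : forall r r' : nat -> bool, (forall i, i < N -> r i = r' i) ->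
      forall i, i < Nb Sigma (size A) -> r i = r' i.
    move=> r r' H i Hi; apply: H; apply: leq_trans Hi (Nb_le _ _); lia.
  have HNB : forall r r' : nat -> bool, (forall i, i < N -> r i = r' i) ->
      forall i, i < Nb Sigma (size B) -> r i = r' i.
    move=> r r' H i Hi; apply: H; apply: leq_trans Hi (Nb_le _ _); lia.
  exists N; split.
    move=> r r' Hrr'.
    have E := ext_props (DA 0) (nxt R0) (upd R0) fin
      (fun s o => cA_ext R0 s o (HNA r r' Hrr')) (fun s o => cB_ext R0 s o (HNB r r' Hrr')).
    split=> -[n [Hh [Ho [Hp Hl]]]]; have [E1 E2 E3] := E n; exists n.
      by rewrite -E2 -E3; split=> //; apply/E1.
    by rewrite E2 E3; split=> //; apply/E1.
  exists (enum [set w : {ffun 'I_N -> bool} | Good A B (ext w)]); split.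
  * exact: enum_uniq.
  * move=> w; rewrite mem_enum inE => HG.
    set l := lcp A B.
    set I := istar l.
    set K := Kof R0 (cc I).
    have [HK HL] := KofP R0 (cc I).
    have H1 := @dbl_ideal Sigma R0 A B (ext w) I 0 HG (subn0 _) (leq0n _).
    have [Hh Hr Ho] := runs_main fin H1.
    eexists; split; first exact: Hh.
    split; first by rewrite Ho.
    split.
    + rewrite /pow_bound.
      have Hb : \sum_(0 <= k < I.+1) (tt (cc k)).+2 + SBits R0 K <= 27 * (Rn R0 * Rn R0) * (K * K).
        have h0 : \sum_(0 <= k < I.+1) (tt (cc k)).+2 <= 18 * 3 ^ I := sum_dbl I.
        have h1 : 3 ^ I <= K * Rn R0 := cc_Kof R0 I.
        have h2 : SBits R0 K <= 9 * (K * K) * (Rn R0 * Rn R0) := SBits_le R0 HK.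
        have h4 : K * Rn R0 <= (K * K) * (Rn R0 * Rn R0).
          by apply: leq_mul; [apply: leq_pmulr; lia | apply: leq_pmulr].
        lia.
      apply: Rle_trans (INR_le Hb) _; rewrite INR_mul.
      have Hk : (INR (K * K) <= 4 * Rpower (INR l + 1) eps)%R by apply: Kreal.
      have Hp : (0 <= Rpower (INR l + 1) eps)%R by rewrite /Rpower; apply: Rlt_le; apply: exp_pos.
      have Ha : (0 <= INR (27 * (Rn R0 * Rn R0)))%R by apply: pos_INR.
      have Hc : (0 <= INR (2 * Rn R0 + 4))%R by apply: pos_INR.
      nra.
    + rewrite /lglg_bound Hr.
      have Hn : nblocks (flatten [seq nseq (tt (cc k)).+1 false ++ [:: true] | k <- iota 0 I.+1]
                 ++ spS R0 K) <= 2 * I + (2 * Rn R0 + 2).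
        apply: leq_trans (nblocks_cat _ _) _.
        apply: leq_trans (leq_add (nblocks_dbl 0 I.+1) (nblocks_spS R0 K)) _; lia.
      apply: Rle_trans (INR_le Hn) _.
      have HI : (INR I <= 1 + ln (1 + ln (1 + INR l)))%R.
        apply: lglg_core => i Hi; have [_ Hm] := istarP l; exact: Hm.
      have L1 : (0 <= ln (1 + INR l))%R by apply: ln_ge0; have := pos_INR l; lra.
      have L2 : (0 <= ln (1 + ln (1 + INR l)))%R by apply: ln_ge0; lra.
      have Ha : (0 <= INR (27 * (Rn R0 * Rn R0)))%R by apply: pos_INR.
      have E1 : INR (2 * I + (2 * Rn R0 + 2)) = (2 * INR I + 2 * INR (Rn R0) + 2)%R.
        by rewrite !INR_add !INR_mul /=; lra.
      have E2 : INR (2 * Rn R0 + 4) = (2 * INR (Rn R0) + 4)%R.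
        by rewrite !INR_add !INR_mul /=; lra.
      rewrite E1 E2.
      set a := INR _ in Ha *.
      set L := ln (1 + ln (1 + INR l)) in HI L2 *.
      have := Rmult_le_pos _ _ HRpos L2; have := Rmult_le_pos _ _ Ha L2.
      nra.
  * apply: card_good; first lia.
    rewrite /N; apply: leq_mul; last lia.
    apply: leq_mul; [lia | exact: leqnSn].
Qed.
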